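(* Let $\alpha=\frac{p}{q}$ with $q\ge1$, $\gcd(p,q)=1$. Then (1) $\mathcal{F}_qR_{\theta_+}=R_0\mathcal{F}_q$; (2) $\mathcal{F}_q\Delta^{\mathrm{per}}_q=D_{q,0}\mathcal{F}_q$; (3) $\mathcal{F}_qD_{q,\theta_+}=\Delta^{\mathrm{anti}}_q\mathcal{F}_q$.
   Context: $\mathcal{V}^{\mathrm{per}}_q$ (resp. $\mathcal{V}^{\mathrm{anti}}_q$) is the $q$-dimensional space of sequences $\psi:\mathbb{Z}\to\mathbb{C}$ with $\psi_{n+q}=\psi_n$ (resp. $\psi_{n+q}=-\psi_n$). $\theta_+=\alpha/2$ if $p$ is odd and $\theta_+=(1+\alpha)/2$ if $p$ is even. For $j\in\mathbb{Z}/q\mathbb{Z}$, $e_j\in\mathcal{V}^{\mathrm{per}}_q$ is given by $(e_j)_n=1$ if $n\equiv j\pmod q$ and $0$ otherwise, and $f_j\in\mathcal{V}^{\mathrm{anti}}_q$ by $(f_j)_n=\exp(2\pi i(j\alpha+\theta_+)n)$. $\mathcal{F}_q:\mathcal{V}^{\mathrm{per}}_q\to\mathcal{V}^{\mathrm{anti}}_q$ is the linear map with $\mathcal{F}_qe_j=f_j$. $\Delta_q\psi=\mathcal{T}_1\psi+\mathcal{T}_{-1}\psi$ where $(\mathcal{T}_r\psi)_n=\psi_{n-r}$, and $\Delta^{\mathrm{per}}_q$, $\Delta^{\mathrm{anti}}_q$ are its restrictions to $\mathcal{V}^{\mathrm{per}}_q$, $\mathcal{V}^{\mathrm{anti}}_q$.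 $D_{q,\theta}$ is the diagonal operator $(D_{q,\theta}\psi)_n=2\cos(2\pi(\theta+n\alpha))\psi_n$ (here $D_{q,0}$ acts on $\mathcal{V}^{\mathrm{anti}}_q$ and $D_{q,\theta_+}$ on $\mathcal{V}^{\mathrm{per}}_q$). $R_0:(\psi_n)\mapsto(\psi_{-n})$ on $\mathcal{V}^{\mathrm{anti}}_q$ and $R_{\theta_+}:(\psi_n)\mapsto(\psi_{-1-n})$ on $\mathcal{V}^{\mathrm{per}}_q$. *)

(* Defs.v *)
From HB Require Import structures.
From mathcomp Require Import all_boot all_order all_algebra.
From mathcomp Require Import reals trigo.
From mathcomp Require Import complex.
Set Implicit Arguments. Unset Strict Implicit. Unset Printing Implicit Defensive.
Import Order.TTheory GRing.Theory Num.Theory.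
Local Open Scope ring_scope.

Section Defs.
Variable R : realType.

Definition seqC := int -> R[i].

Definition alpha (p : int) (q : nat) : R := p%:~R / q%:R.

Definition theta_plus (p : int) (q : nat) : R :=
  if odd `|p|%N then alpha p q / 2 else (1 + alpha p q) / 2.

Definition e2pi (x : R) : R[i] := Complex (cos (2 * pi * x)) (sin (2 * pi * x)).

Definition is_per (q : nat) (psi : seqC) := forall n : int, psi (n + q%:Z) = psi n.
Definition is_anti (q : nat) (psi : seqC) := forall n : int, psi (n + q%:Z) = - psi n.

(* f_j, (f_j)_n = exp(2 pi i (j alpha + theta_+) n), j in {0..q-1} representing Z/qZ *)
Definition fvec (p : int) (q : nat) (j : nat) : seqC :=
  fun n => e2pi ((j%:R * alpha p q + theta_plus p q) * n%:~R).

(* F_q : the linear map with F_q e_j = f_j; since psi = sum_j psi_j e_j on V^per,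
   F_q psi = sum_{j in Z/qZ} psi_j f_j *)
Definition Fq (p : int) (q : nat) (psi : seqC) : seqC :=
  fun n => \sum_(j < q) psi (j : nat)%:Z * fvec p q j n.

Definition Tr (r : int) (psi : seqC) : seqC := fun n => psi (n - r).
Definition Delta (psi : seqC) : seqC := fun n => Tr 1 psi n + Tr (-1) psi n.

Definition Dq (p : int) (q : nat) (theta : R) (psi : seqC) : seqC :=
  fun n => Complex (2 * cos (2 * pi * (theta + n%:~R * alpha p q))) 0 * psi n.

Definition R0 (psi : seqC) : seqC := fun n => psi (- n).
Definition Rtp (psi : seqC) : seqC := fun n => psi (-1 - n).

End Defs.

Arguments alpha {R}. Arguments theta_plus {R}. Arguments e2pi {R}.
Arguments is_per {R}. Arguments is_anti {R}. Arguments fvec {R}.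
Arguments Fq {R}. Arguments Tr {R}. Arguments Delta {R}. Arguments Dq {R}.
Arguments R0 {R}. Arguments Rtp {R}.

(* Main.v *)
Require Import Defs.
From HB Require Import structures.
From mathcomp Require Import all_boot all_order all_algebra.
From mathcomp Require Import reals trigo.
From mathcomp Require Import complex.
From mathcomp Require Import ring zify.
From Stdlib Require Import FunctionalExtensionality.
Import Order.TTheory GRing.Theory Num.Theory.
Local Open Scope ring_scope.

Section S.
Variable R : realType.

Lemma perz (f : R -> R) (T : R) : periodic f T -> forall (k : int) a, f (a + T *~ k) = f a.
Proof.
move=> hf [] n a; first exact: periodicn.
rewrite NegzE mulrNz; have := periodicn hf n.+1 (a - T *+ n.+1).
by rewrite subrK => <-.
Qed.

Lemma e2piD (x y : R) : e2pi (x + y) = e2pi x * e2pi y.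
Proof.
rewrite /e2pi mulrDr cosD sinD /=; congr Complex; ring.
Qed.

Lemma e2pi_int (k : int) : e2pi (k%:~R : R) = 1.
Proof.
have E : 2 * pi * k%:~R = 0 + (pi *+ 2) *~ k :> R.
  rewrite add0r -mulrzr mulr2n; ring.
rewrite /e2pi E (@perz cos _ (@cosD2pi R)) (@perz sin _ (@sinD2pi R)) cos0 sin0.
by [].
Qed.

Lemma e2pi_shift (x y : R) (k : int) : x = y + k%:~R -> e2pi x = e2pi y.
Proof. by move=> ->; rewrite e2piD e2pi_int mulr1. Qed.

Lemma e2piNsum (x : R) : e2pi (- x) + e2pi x = Complex (2 * cos (2 * pi * x)) 0.
Proof.
rewrite /e2pi mulrN cosN sinN /=; congr Complex; ring.
Qed.

Lemma sum_shift (q : nat) (g : int -> R[i]) : (0 < q)%N ->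
  (forall m, g (m + q%:Z) = g m) ->
  \sum_(j < q) g ((j : nat)%:Z - 1) = \sum_(j < q) g (j : nat)%:Z.
Proof.
case: q => // q' _ hg.
rewrite big_ord_recl big_ord_recr /= addrC; congr (_ + _).
  have e : (q'%:Z) = (0 - 1) + q'.+1%:Z by lia.
  by rewrite e hg.
by apply: eq_bigr => j _; rewrite /bump /=; congr g; lia.
Qed.

Lemma sum_shiftS (q : nat) (g : int -> R[i]) : (0 < q)%N ->
  (forall m, g (m + q%:Z) = g m) ->
  \sum_(j < q) g ((j : nat)%:Z + 1) = \sum_(j < q) g (j : nat)%:Z.
Proof.
move=> hq hg.
have := @sum_shift q (fun m => g (m + 1)) hq.
rewrite /=.
have -> : \sum_(j < q) g ((j : nat)%:Z - 1 + 1) = \sum_(j < q) g (j : nat)%:Z.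
  by apply: eq_bigr => j _; rewrite subrK.
move=> <- //.
by move=> m; rewrite -addrA (addrC q%:Z) addrA hg.
Qed.


Variables (p : int) (q : nat).
Hypothesis hq : (0 < q)%N.

Lemma qne0 : (q%:R : R) != 0.
Proof. by rewrite pnatr_eq0 -lt0n. Qed.

Lemma part3 (psi : seqC R) :
  Fq p q (Dq p q (theta_plus p q) psi) = Delta (Fq p q psi).
Proof.
apply: functional_extensionality => n.
rewrite /Fq /Delta /Tr /Dq -big_split; apply: eq_bigr => j _; rewrite /fvec /=.
set b := (j%:R * alpha p q + theta_plus p q).
have h1 : b * (n - 1)%:~R = b * n%:~R + - b by rewrite rmorphB /=; ring.
have h2 : b * (n - -1)%:~R = b * n%:~R + b by rewrite rmorphB rmorphN /=; ring.
rewrite h1 h2 (e2piD (b * n%:~R) (-b)) (e2piD (b * n%:~R) b).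
have -> : theta_plus p q + (j : nat)%:Z%:~R * alpha p q = b by rewrite addrC.
rewrite -e2piNsum; ring.
Qed.

Lemma qa : (q%:Z)%:~R * alpha p q = p%:~R :> R.
Proof. by rewrite /alpha mulrC divfK ?qne0. Qed.

Lemma part2 (psi : seqC R) : is_per q psi ->
  Fq p q (Delta psi) = Dq p q 0 (Fq p q psi).
Proof.
move=> hper; apply: functional_extensionality => n.
rewrite /Fq /Delta /Tr /Dq.
set g1 := fun m : int => psi m * e2pi (((m + 1)%:~R * alpha p q + theta_plus p q) * n%:~R).
set g2 := fun m : int => psi m * e2pi (((m - 1)%:~R * alpha p q + theta_plus p q) * n%:~R).
have per_e : forall k : int, @e2pi R (((k + q%:Z)%:~R * alpha p q + theta_plus p q) * n%:~R)
   = e2pi ((k%:~R * alpha p q + theta_plus p q) * n%:~R).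
  move=> k; apply: (@e2pi_shift _ _ (p * n)).
  rewrite intrD intrM -qa; ring.
have hg1 : forall m, g1 (m + q%:Z) = g1 m.
  move=> m; rewrite /g1 hper.
  have -> : m + q%:Z + 1 = (m + 1) + q%:Z by rewrite addrAC.
  by rewrite per_e.
have hg2 : forall m, g2 (m + q%:Z) = g2 m.
  move=> m; rewrite /g2 hper.
  have -> : m + q%:Z - 1 = (m - 1) + q%:Z by rewrite addrAC.
  by rewrite per_e.
rewrite (eq_bigr (fun j : 'I_q => g1 ((j:nat)%:Z - 1) + g2 ((j:nat)%:Z + 1))); last first.
  by move=> j _; rewrite /g1 /g2 subrK addrK mulrDl opprK.
rewrite big_split /= (@sum_shift q _ hq hg1) (@sum_shiftS q _ hq hg2).
rewrite mulr_sumr -big_split; apply: eq_bigr => j _; rewrite /g1 /g2 /fvec.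
set b := (j%:R * alpha p q + theta_plus p q).
have e1 : (((j : nat)%:Z + 1)%:~R * alpha p q + theta_plus p q) * n%:~R
   = b * n%:~R + alpha p q * n%:~R by rewrite intrD /b; ring.
have e2 : (((j : nat)%:Z - 1)%:~R * alpha p q + theta_plus p q) * n%:~R
   = b * n%:~R + - (alpha p q * n%:~R) by rewrite intrD intrN /b; ring.
rewrite e1 e2 !e2piD add0r (mulrC n%:~R) -e2piNsum /b; simpl; ring.
Qed.

Lemma part1 (psi : seqC R) : is_per q psi ->
  Fq p q (Rtp psi) = R0 (Fq p q psi).
Proof.
move=> hper; apply: functional_extensionality => n.
rewrite /Fq /Rtp /R0 [RHS](reindex_inj rev_ord_inj) /=; apply: eq_bigr => j _; rewrite /fvec.
have hj := ltn_ord j.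
congr (_ * _).
  rewrite -(hper (-1 - (j : nat)%:Z)); congr psi; lia.
rewrite natrB // -addn1 natrD intrN.
rewrite /theta_plus; case: ifP => _;
  [apply: (@e2pi_shift _ _ (p * n)) | apply: (@e2pi_shift _ _ ((p + 1) * n))];
  rewrite intrM ?intrD /alpha; field; exact: qne0.
Qed.

End S.

Theorem lemmal (R : realType) (p : int) (q : nat) :
  (0 < q)%N -> coprimez p q%:Z ->
  (forall psi : seqC R, is_per q psi ->
     Fq p q (Rtp psi) = R0 (Fq p q psi)) /\
  (forall psi : seqC R, is_per q psi ->
     Fq p q (Delta psi) = Dq p q 0 (Fq p q psi)) /\
  (forall psi : seqC R, is_per q psi ->
     Fq p q (Dq p q (theta_plus p q) psi) = Delta (Fq p q psi)).
Proof.
move=> hq _; split; [|split].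
- by move=> psi; apply: part1.
- by move=> psi; apply: part2.
- by move=> psi _; apply: part3.
Qed.
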